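(* For every $t\ge 0$ and every collection $\Omega$ of functions, $$\rho_1\bigl(\mathsf{cr}^{(t)}\bigr)=\rho_1\bigl(\mathsf{GTL}_2^{(t)}(\Omega)\bigr).$$
   Context: Fix integers $n\ge 1$ and $\ell\ge 1$. A graph is a triple $G=(V_G,E_G,\mathrm{col}_G)$ with $V_G=[n]=\{1,\dots,n\}$, $E_G$ a set of unordered pairs of distinct vertices (undirected, no loops), and a vertex labelling $\mathrm{col}_G:V_G\to\mathbb R^\ell$; $N_G(v)=\{u:uv\in E_G\}$. Let $\mathcal G_1=\{(G,v):G \text{ a graph},\ v\in V_G\}$. Tensor language: let $\Omega$ be a collection of functions, each $f:\mathbb R^p\to\mathbb R$ for some $p\ge1$. Expressions are generated by $\varphi::=\mathbf 1_{x=y}\mid \mathbf 1_{x\neq y}\mid E(x,y)\mid P_s(x)\mid \varphi\cdot\varphi\mid \varphi+\varphi\mid a\cdot\varphi\mid f(\varphi_1,\dots,\varphi_p)\mid \sum_x\varphi$ ($s\in[\ell]$, $a\in\mathbb R$, $f\in\Omega$ of arity $p$), with the usual free variables ($\sum_x$ binds $x$). Semantics for a graph $G$ and valuation $\nu$ of the variables in $V_G$: $[\![E(x,y)]\!]^\nu_G=1$ if $\nu(x)\nu(y)\in E_G$ else $0$; $[\![P_s(x)]\!]^\nu_G=\mathrm{col}_G(\nu(x))_s$; $[\![\mathbf 1_{x\,\mathrm{op}\,y}]\!]^\nu_G=1$ if $\nu(x)\,\mathrm{op}\,\nu(y)$ else $0$; $\cdot,+,a\cdot,f$ act on values; $[\![\sum_x\varphi]\!]^\nu_G=\sum_{v\in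 V_G}[\![\varphi]\!]^{\nu[x\mapsto v]}_G$. Summation depth $\mathrm{sd}$: $0$ for atoms, maximum over components for $\cdot,+,f(\dots)$, unchanged by $a\cdot$, and $\mathrm{sd}(\sum_x\varphi)=\mathrm{sd}(\varphi)+1$. Guarded fragment $\mathsf{GTL}_2(\Omega)$: the smallest set of expressions, each with exactly one free variable, which is $x_1$ or $x_2$, containing $\mathbf 1_{x_i=x_i}$, $\mathbf 1_{x_i\ne x_i}$, $P_s(x_i)$ ($i\in\{1,2\}$, $s\in[\ell]$), and closed under: $\varphi\cdot\psi$, $\varphi+\psi$ when $\varphi,\psi$ have the same single free variable; $a\cdot\varphi$; $f(\varphi_1,\dots,\varphi_p)$ for $f\in\Omega$ when all $\varphi_j$ have the same single free variable; and $\sum_{x_j}\bigl(E(x_i,x_j)\cdot\varphi\bigr)$ where $\{i,j\}=\{1,2\}$ and $\varphi$ has free variable $x_j$. $\mathsf{GTL}_2^{(t)}(\Omega)$ is its subset of summation depth at most $t$. $\rho_1(\mathsf{GTL}_2^{(t)}(\Omega))$ is the set of pairs $((G,v),(H,w))\in\mathcal G_1\times\mathcal G_1$ such that $[\![\varphi]\!]^{x_1\mapsto v}_G=[\![\varphi]\!]^{x_1\mapsto w}_H$ for all $\varphi\in\mathsf{GTL}_2^{(t)}(\Omega)$ with free variable $x_1$. Color refinement: $\mathsf{cr}^{(0)}(G,v)=\mathrm{col}_G(v)$ and $\mathsf{cr}^{(t+1)}(G,v)=\bigl(\mathsf{cr}^{(t)}(G,v),\{\!\{\mathsf{cr}^{(t)}(G,u):u\in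 N_G(v)\}\!\}\bigr)$ (multiset), compared as formal objects across graphs. $\rho_1(\mathsf{cr}^{(t)})=\{((G,v),(H,w)):\mathsf{cr}^{(t)}(G,v)=\mathsf{cr}^{(t)}(H,w)\}$. *)

(* Defs.v *)
From HB Require Import structures.
From Stdlib Require Import Reals.
From mathcomp Require Import all_boot all_order all_algebra.
From mathcomp Require Import boolp Rstruct.

Set Implicit Arguments.
Unset Strict Implicit.
Unset Printing Implicit Defensive.

Import GRing.Theory.
Local Open Scope ring_scope.

(* A graph on vertex set [n] = 'I_n with labels in R^l = ('I_l -> R):
   E_G is a set of unordered pairs of distinct vertices, i.e. a symmetric,
   irreflexive relation. *)
Record graph (n l : nat) := Graph {
  adj : rel 'I_n;
  adj_sym : forall u v, adj u v = adj v u;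
  adj_irr : forall v, adj v v = false;
  col : 'I_n -> 'I_l -> R
}.

Definition func := {p : nat & ('I_p -> R) -> R}.

(* Syntax of the tensor language; variables are natural numbers
   (x_1 is 1, x_2 is 2). *)
Inductive expr (l : nat) : Type :=
| EqV   : nat -> nat -> expr l
| NeqV  : nat -> nat -> expr l
| Edge  : nat -> nat -> expr l
| Lab   : 'I_l -> nat -> expr l
| Mul   : expr l -> expr l -> expr l
| Add   : expr l -> expr l -> expr l
| Scale : R -> expr l -> expr l
| App   : forall p : nat, (('I_p -> R) -> R) -> ('I_p -> expr l) -> expr l
| Sum   : nat -> expr l -> expr l.

Arguments EqV {l}. Arguments NeqV {l}. Arguments Edge {l}. Arguments Lab {l}.
Arguments App {l} p f args.
Arguments Sum {l}.

Fixpoint sem n l (G : graph n l) (nu : nat -> 'I_n) (e : expr l) : R :=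
  match e with
  | EqV x y => if nu x == nu y then 1 else 0
  | NeqV x y => if nu x != nu y then 1 else 0
  | Edge x y => if adj G (nu x) (nu y) then 1 else 0
  | Lab s x => col G (nu x) s
  | Mul a b => sem G nu a * sem G nu b
  | Add a b => sem G nu a + sem G nu b
  | Scale c a => c * sem G nu a
  | App p f args => f (fun k => sem G nu (args k))
  | Sum x a => \sum_(v : 'I_n) sem G (fun y => if y == x then v else nu y) a
  end.

Fixpoint sd l (e : expr l) : nat :=
  match e with
  | EqV _ _ | NeqV _ _ | Edge _ _ | Lab _ _ => 0%N
  | Mul a b | Add a b => maxn (sd a) (sd b)
  | Scale _ a => sd a
  | App p _ args => (\max_(k < p) sd (args k))%N
  | Sum _ a => (sd a).+1
  end.

(* The guarded fragment GTL_2(Omega): [gtl Omega i phi] means phi belongs to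
   GTL_2(Omega) and its unique free variable is x_i (i in {1,2}). *)
Inductive gtl (l : nat) (Omega : func -> Prop) : nat -> expr l -> Prop :=
| gtl_eq : forall i, (i = 1 \/ i = 2)%N -> gtl Omega i (EqV i i)
| gtl_neq : forall i, (i = 1 \/ i = 2)%N -> gtl Omega i (NeqV i i)
| gtl_lab : forall i s, (i = 1 \/ i = 2)%N -> gtl Omega i (Lab s i)
| gtl_mul : forall i a b, gtl Omega i a -> gtl Omega i b -> gtl Omega i (Mul a b)
| gtl_add : forall i a b, gtl Omega i a -> gtl Omega i b -> gtl Omega i (Add a b)
| gtl_scale : forall i c a, gtl Omega i a -> gtl Omega i (Scale c a)
| gtl_app : forall i p f args, Omega (existT _ p f) ->
    (forall k, gtl Omega i (args k)) -> gtl Omega i (App p f args)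
| gtl_sum : forall i j a, ((i = 1 /\ j = 2) \/ (i = 2 /\ j = 1))%N ->
    gtl Omega j a -> gtl Omega i (Sum j (Mul (Edge i j) a)).

Definition rho1_gtl n l (Omega : func -> Prop) (t : nat)
    (G : graph n l) (v : 'I_n) (H : graph n l) (w : 'I_n) : Prop :=
  forall phi : expr l, gtl Omega 1%N phi -> (sd phi <= t)%N ->
    sem G (fun _ => v) phi = sem H (fun _ => w) phi.

(* Colour refinement colours, as formal objects: a multiset over a type X is
   its multiplicity function X -> nat. *)
Fixpoint crcol (l t : nat) : Type :=
  match t with
  | 0 => 'I_l -> R
  | t'.+1 => (crcol l t' * (crcol l t' -> nat))%type
  end.

Fixpoint cr n l (t : nat) (G : graph n l) (v : 'I_n) : crcol l t :=
  match t return crcol l t with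
  | 0 => col G v
  | t'.+1 => (cr t' G v,
              fun c => #|[set u | adj G v u & `[< cr t' G u = c >] ]|)
  end.

Definition rho1_cr n l (t : nat) (G : graph n l) (v : 'I_n)
    (H : graph n l) (w : 'I_n) : Prop :=
  cr t G v = cr t H w.

(* Main.v *)
Require Import Defs.
From Stdlib Require Import Reals.
From mathcomp Require Import all_boot all_order all_algebra.
From mathcomp Require Import boolp Rstruct.
Set Implicit Arguments.
Unset Strict Implicit.
Unset Printing Implicit Defensive.
Import GRing.Theory Num.Theory.
Local Open Scope ring_scope.
Bind Scope ring_scope with R.
Lemma RmultE (x y : R) : Rmult x y = x * y. Proof. by []. Qed.
Lemma RplusE (x y : R) : Rplus x y = x + y. Proof. by []. Qed.

Lemma cnt_D1 (n : nat) (X : Type) (c : 'I_n -> X) (N : {set 'I_n}) v x :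
  v \in N ->
  #|[set w in N | `[< c w = x >]]| = (`[< c v = x >] + #|[set w in N :\ v | `[< c w = x >]]|)%N.
Proof.
move=> vN; rewrite (cardsD1 v) inE vN /=; congr (_ + _)%N.
by apply: eq_card => w; rewrite !inE; case: (w == v); rewrite ?andbF.
Qed.

Lemma sum_match (n : nat) (X : Type) (cG cH : 'I_n -> X) (g g' : 'I_n -> R) :
  (forall v v', cG v = cH v' -> g v = g' v') ->
  forall k (N M : {set 'I_n}), #|N| = k ->
  (forall x, #|[set v in N | `[< cG v = x >]]| = #|[set v in M | `[< cH v = x >]]|) ->
  \sum_(v in N) g v = \sum_(v in M) g' v.
Proof.
move=> hg; elim=> [|k IH] N M hN hc.
  have N0 := cards0_eq hN; subst N.
  case: (set_0Vmem M) => [->|[v' v'M]]; first by rewrite !big_set0.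
  have := hc (cH v'); rewrite (@cnt_D1 _ _ cH M v') // asboolT //.
  by rewrite (_ : [set v in set0 | _] = set0) ?cards0 //; apply/setP=> w; rewrite !inE.
have : (0 < #|N|)%N by rewrite hN.
rewrite card_gt0 => /set0Pn [v vN].
have : (0 < #|[set w in M | `[< cH w = cG v >]]|)%N.
  by rewrite -hc (@cnt_D1 _ _ cG N v) // asboolT.
rewrite card_gt0 => /set0Pn [v']; rewrite inE => /andP [v'M /asboolP hv'].
rewrite (big_setD1 v) // [RHS](big_setD1 v') //= (hg v v' (esym hv')); congr (_ + _).
apply: (IH).
  by move: hN; rewrite (cardsD1 v) vN => -[].
move=> x; have := hc x.
rewrite (@cnt_D1 _ _ cG N v) // (@cnt_D1 _ _ cH M v') // hv'.
by move/eqP; rewrite eqn_add2l => /eqP.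
Qed.

Lemma cr0 n l s (G H : graph n l) u u' : cr s G u = cr s H u' -> Defs.col G u = Defs.col H u'.
Proof. by elim: s => [//|s IH] /= [/IH]. Qed.

Lemma sum_adj n l (G : graph n l) u (g : 'I_n -> R) :
  \sum_v ((if adj G u v then 1 else 0) * g v) = \sum_(v in [set v | adj G u v]) g v.
Proof.
rewrite [RHS]big_mkcond; apply: eq_bigr => v _; rewrite inE.
by case: adj; rewrite ?mul1r ?mul0r.
Qed.

Lemma dir1 n l Omega i (phi : expr l) : gtl Omega i phi -> forall s, (sd phi <= s)%N ->
  forall (G H : graph n l) nu nu', cr s G (nu i) = cr s H (nu' i) ->
  sem G nu phi = sem H nu' phi.
Proof.
elim=> {i phi}.
- by move=> i _ s _ G H nu nu' _ /=; rewrite !eqxx.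
- by move=> i _ s _ G H nu nu' _ /=; rewrite !eqxx.
- by move=> i k _ s _ G H nu nu' /= /cr0 ->.
- move=> i a b _ IHa _ IHb s /=; rewrite geq_max => /andP [ha hb] G H nu nu' hc.
  by rewrite (IHa s ha G H nu nu' hc) (IHb s hb G H nu nu' hc).
- move=> i a b _ IHa _ IHb s /=; rewrite geq_max => /andP [ha hb] G H nu nu' hc.
  by rewrite (IHa s ha G H nu nu' hc) (IHb s hb G H nu nu' hc).
- by move=> i c a _ IHa s /= ha G H nu nu' hc; rewrite (IHa s ha G H nu nu' hc).
- move=> i p f args _ _ IH s /= hs G H nu nu' hc; congr f; apply: funext => k.
  exact: (IH k s (leq_trans (leq_bigmax k) hs) G H nu nu' hc).
- move=> i j a hij _ IHa [|s] //= hs G H nu nu' hc.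
  have ij : (i == j) = false by case: hij => [[-> ->]|[-> ->]].
  rewrite ij in hs *; rewrite !eqxx.
  under eq_bigr do rewrite RmultE. under [RHS]eq_bigr do rewrite RmultE.
  rewrite (sum_adj G (nu i) (fun v => sem G (fun y => if y == j then v else nu y) a)).
  rewrite (sum_adj H (nu' i) (fun v => sem H (fun y => if y == j then v else nu' y) a)).
  case: hc => _ hm.
  apply: (@sum_match _ _ (cr s G) (cr s H)) => //.
  + move=> v v' hv; apply: (IHa s _ G H) => //=; [by rewrite max0n in hs | by rewrite !eqxx].
  + move=> x; have := congr1 (fun f => f x) hm => /= e.
    rewrite (eq_card (B := [set u | adj G (nu i) u & `[< cr s G u = x >]])); last first.
      by move=> u; rewrite !inE.
    rewrite e; apply: eq_card => u; by rewrite !inE.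
Qed.

Definition prodI n l (j : nat) (F : 'I_n -> expr l) (r : seq 'I_n) : expr l :=
  foldr (fun z acc => Mul (F z) acc) (EqV j j) r.

Lemma prodI_gtl n l Omega j (F : 'I_n -> expr l) r : (j = 1 \/ j = 2)%N ->
  (forall z, gtl Omega j (F z)) -> gtl Omega j (prodI j F r).
Proof.
move=> hj hF; elim: r => [|z r IH] /=; first exact: gtl_eq.
exact: gtl_mul.
Qed.

Lemma prodI_sd n l j (F : 'I_n -> expr l) r t :
  (forall z, (sd (F z) <= t)%N) -> (sd (prodI j F r) <= t)%N.
Proof. move=> hF; elim: r => [|z r IH] //=; by rewrite geq_max hF IH. Qed.

Lemma prodI_one n l j (F : 'I_n -> expr l) r (K : graph n l) nu :
  (forall z, sem K nu (F z) = 1) -> sem K nu (prodI j F r) = 1.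
Proof. move=> hF; elim: r => [|z r IH] /=; first by rewrite eqxx.
by rewrite RmultE hF IH mulr1. Qed.

Lemma prodI_zero n l j (F : 'I_n -> expr l) r (K : graph n l) nu z :
  z \in r -> sem K nu (F z) = 0 -> sem K nu (prodI j F r) = 0.
Proof.
move=> hz h0; elim: r hz => [|z' r IH] //=; rewrite inE => /orP [/eqP <-|/IH ->].
  by rewrite RmultE h0 mul0r.
by rewrite RmultE mulr0.
Qed.

Definition Sep n l (Omega : func -> Prop) t := forall i, (i = 1 \/ i = 2)%N ->
  forall (G H : graph n l) x y, cr t G x <> cr t H y ->
  exists phi, gtl Omega i phi /\ (sd phi <= t)%N /\
    sem G (fun _ => x) phi <> sem H (fun _ => y) phi.

Lemma factor n l Omega t : Sep n l Omega t -> forall j, (j = 1 \/ j = 2)%N ->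
  forall (c : crcol l t) (K0 : graph n l) r, cr t K0 r = c ->
  forall (G : graph n l) z, exists f, gtl Omega j f /\ (sd f <= t)%N /\
    (forall (K : graph n l) y, cr t K y = c -> sem K (fun _ => y) f = 1) /\
    (cr t G z <> c -> sem G (fun _ => z) f = 0).
Proof.
move=> hS j hj c K0 r hr G z.
case: (pselect (cr t G z = c)) => hz.
  exists (EqV j j); split; first exact: gtl_eq.
  split=> //; split=> [K y _ /=|/(_ hz)//]; by rewrite eqxx.
have [psi [gpsi [sdpsi hne]]] : exists phi, gtl Omega j phi /\ (sd phi <= t)%N /\
    sem K0 (fun _ => r) phi <> sem G (fun _ => z) phi.
  by apply: hS => //; rewrite hr => /esym /hz.
set a := sem K0 (fun _ => r) psi in hne *.
set b := sem G (fun _ => z) psi in hne *.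
have hab : a - b != 0 by rewrite subr_eq0; apply/eqP.
exists (Scale ((a - b)^-1) (Add psi (Scale (- b) (EqV j j)))).
split; first by apply: gtl_scale; apply: gtl_add => //; apply: gtl_scale; exact: gtl_eq.
split; first by rewrite /= geq_max sdpsi.
split.
  move=> K y hy /=; rewrite !RmultE RplusE eqxx mulr1.
  rewrite (@dir1 n l Omega j psi gpsi t sdpsi K K0 (fun _ => y) (fun _ => r)) ?hr //.
  by rewrite mulVf.
by move=> _ /=; rewrite !RmultE RplusE eqxx mulr1 -/b subrr mulr0.
Qed.

Lemma indicator n l Omega t : Sep n l Omega t -> forall j, (j = 1 \/ j = 2)%N ->
  forall (c : crcol l t) (K0 : graph n l) r, cr t K0 r = c ->
  forall G H : graph n l, exists psi, gtl Omega j psi /\ (sd psi <= t)%N /\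
    (forall z, sem G (fun _ => z) psi = if `[< cr t G z = c >] then 1 else 0) /\
    (forall z, sem H (fun _ => z) psi = if `[< cr t H z = c >] then 1 else 0).
Proof.
move=> hS j hj c K0 r hr G H.
have [FG hFG] := choice (factor hS hj hr G).
have [FH hFH] := choice (factor hS hj hr H).
exists (Mul (prodI j FG (enum 'I_n)) (prodI j FH (enum 'I_n))).
split.
  by apply: gtl_mul; apply: prodI_gtl => // z; [case: (hFG z)|case: (hFH z)].
split.
  by rewrite /= geq_max !prodI_sd // => z; [case: (hFH z)|case: (hFG z)] => _ [].
have key : forall (K : graph n l) y, cr t K y = c ->
    sem K (fun _ => y) (Mul (prodI j FG (enum 'I_n)) (prodI j FH (enum 'I_n))) = 1.
  move=> K y hy /=; rewrite RmultE !prodI_one ?mulr1 // => z.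
    by case: (hFH z) => _ [_ [h _]]; apply: h.
  by case: (hFG z) => _ [_ [h _]]; apply: h.
split=> z; (case: asboolP => hz; [by rewrite key | rewrite /= RmultE]).
  rewrite (@prodI_zero _ _ j FG _ G _ z) ?mem_enum ?mul0r //.
  by case: (hFG z) => _ [_ [_ h]]; apply: h.
rewrite [X in _ * X](@prodI_zero _ _ j FH _ H _ z) ?mem_enum ?mulr0 //.
by case: (hFH z) => _ [_ [_ h]]; apply: h.
Qed.

Lemma sem_count n l Omega t i j (psi : expr l) (G : graph n l) (c : crcol l t) nu :
  i != j -> gtl Omega j psi ->
  (forall z, sem G (fun _ => z) psi = if `[< cr t G z = c >] then 1 else 0) ->
  sem G nu (Sum j (Mul (Edge i j) psi)) =
  (#|[set u | adj G (nu i) u & `[< cr t G u = c >]]|)%:R.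
Proof.
move=> ij gpsi hpsi /=; rewrite (negbTE ij) eqxx.
under eq_bigr => v _.
  rewrite RmultE (@dir1 n l Omega j psi gpsi (sd psi) (leqnn _) G G _ (fun _ => v)); last by rewrite eqxx.
  rewrite hpsi; over.
rewrite sum_adj -big_mkcondr sumr_const; congr (_ *+ _).
by apply: eq_card => u; rewrite unfold_in /= !inE.
Qed.

Lemma sep_all n l Omega t : Sep n l Omega t.
Proof.
elim: t => [|t IH] i hi G H x y /= hne.
  have [s hs] : exists s, Defs.col G x s <> Defs.col H y s.
    apply: contrapT => hn; apply: hne; apply: funext => s; apply: contrapT => hs.
    by apply: hn; exists s.
  by exists (Lab s i); split; [exact: gtl_lab | split].
case: (pselect (cr t G x = cr t H y)) => e; last first.
  have [phi [g [s d]]] := IH i hi G H x y e.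
  by exists phi; split => //; split => //; exact: leqW.
have [c hc] : exists c, #|[set u | adj G x u & `[< cr t G u = c >]]| <>
                        #|[set u | adj H y u & `[< cr t H u = c >]]|.
  apply: contrapT => hn; apply: hne; rewrite e; congr pair; apply: funext => c.
  by apply: contrapT => hc; apply: hn; exists c.
set j := if i == 1%N then 2%N else 1%N.
have hj : (j = 1 \/ j = 2)%N by rewrite /j; case: ifP; auto.
have hij : ((i = 1 /\ j = 2) \/ (i = 2 /\ j = 1))%N by rewrite /j; case: hi => ->; auto.
have ij : i != j by case: hij => [[-> ->]|[-> ->]].
have [K0 [r hr]] : exists (K0 : graph n l) r, cr t K0 r = c.
  case: (set_0Vmem [set u | adj G x u & `[< cr t G u = c >]]) => [h0|[u]].
    case: (set_0Vmem [set u | adj H y u & `[< cr t H u = c >]]) => [h1|[u]].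
      by exfalso; apply: hc; rewrite h0 h1.
    by rewrite inE => /andP [_ /asboolP h]; exists H, u.
  by rewrite inE => /andP [_ /asboolP h]; exists G, u.
have [psi [g [sdp [hG hH]]]] := indicator IH hj hr G H.
exists (Sum j (Mul (Edge i j) psi)); split; first exact: gtl_sum.
split; first by rewrite /= max0n.
rewrite (sem_count _ ij g hG) (sem_count _ ij g hH) => /eqP; rewrite eqr_nat => /eqP.
exact: hc.
Qed.

Theorem theorem3 (n l : nat) (hn : (0 < n)%N) (hl : (0 < l)%N)
    (Omega : func -> Prop) (hOmega : forall f, Omega f -> (0 < projT1 f)%N)
    (t : nat) (G H : graph n l) (v w : 'I_n) :
  rho1_cr t G v H w <-> rho1_gtl Omega t G v H w.
Proof.
split.
  by move=> hcr phi g hsd; apply: (dir1 g hsd).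
move=> hg; apply: contrapT => hne.
have [phi [g [s d]]] := @sep_all n l Omega t 1%N (or_introl erefl) G H v w hne.
exact: d (hg phi g s).
Qed.
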